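(* For all integers $0\le k_1\le k_2<k_3$, $$\sigma_2(\mathsf S_{k_1,k_2,k_3})=\sigma_2\big((I\otimes A_H)\,G_{k_2\bmod s}\,(I\otimes A_H)\big),$$ where singular values of $\mathsf S_{k_1,k_2,k_3}:\mathbb R^{W[k_2+1,k_3]}\to\mathbb R^{W[k_1,k_2]}$ are taken with respect to the uniform probability measures on $W[k_2+1,k_3]$ and $W[k_1,k_2]$.
   Context: $G$ is a $d_1$-regular undirected graph on $[n]$ with a locally invertible rotation map $\mathrm{rot}_G$; $H$ is a $d_2$-regular undirected graph on $[d_1]^s$ with normalized adjacency $A_H$ and a fixed labeling of its edges at each vertex. $\mathrm{Rot}_i$ ($0\le i<s$) sends $(v,(a_0,\dots,a_{s-1}))$ to $(v',(a_0,\dots,a_i',\dots,a_{s-1}))$ with $(v',a_i')=\mathrm{rot}_G(v,a_i)$, and $G_i$ is its permutation matrix. For $0\le k_1\le k_2$, $W[k_1,k_2]$ is the set of tuples $(x_{k_1},(a_{k_1},b_{k_1}),\dots,(a_{k_2-1},b_{k_2-1}))$ with $x_{k_1}\in[n]\times[d_1]^s$, $(a_i,b_i)\in[d_2]^2$, determining vertices $x_{k_1},\dots,x_{k_2}$ where $x_{i+1}$ is obtained from $x_i$ by an $H$-step along edge $a_i$, then $\mathrm{Rot}_{i\bmod s}$, then an $H$-step along edge $b_i$. For $k_1\le k_2<k_3$, a uniform $\omega\in W[k_1,k_3]$ splits as $\omega_1\in W[k_1,k_2]$ (start vertex and first $k_2-k_1$ label pairs) and $\omega_2\in W[k_2+1,k_3]$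 (vertex $x_{k_2+1}$ and remaining labels); $(\mathsf S_{k_1,k_2,k_3}f)(w)=\mathbb E[f(\omega_2)\mid\omega_1=w]$. $\sigma_2$ denotes the second largest singular value. *)

(* Defs.v *)
(* Real scalars: an arbitrary real closed field R (rcfType),
   which includes the real numbers; the statement is purely algebraic. *)
From HB Require Import structures.
From mathcomp Require Import all_boot all_order all_algebra.
From Stdlib Require Import ClassicalEpsilon.

Set Implicit Arguments.
Unset Strict Implicit.
Unset Printing Implicit Defensive.

Import Order.TTheory GRing.Theory Num.Theory.
Local Open Scope ring_scope.

(* An operator R^Y -> R^X is given by its kernel K : X -> Y -> R,           *)
(*   (K f)(x) = \sum_y K x y * f y.                                         *)

Section SingularValues.
Variable R : rcfType.

(* the eigenvalues of a square matrix counted with algebraic multiplicity,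
   listed in non-increasing order (chosen classically; such a list exists
   and is unique whenever the characteristic polynomial splits over R,
   which is the case for the self-adjoint operators considered below). *)
Definition eigs_desc m (A : 'M[R]_m) : seq R :=
  epsilon (inhabits [::])
    (fun l : seq R => sorted (fun a b => b <= a) l /\
                      char_poly A = \prod_(x <- l) ('X - x%:P)).

Definition kmx (T : finType) (K : T -> T -> R) : 'M[R]_#|T| :=
  \matrix_(i, j) K (enum_val i) (enum_val j).

(* adjoint of K : R^Y -> R^X w.r.t. <f,g>_muX = \sum_x muX x f x g x and
   the analogous inner product on R^Y *)
Definition wadj (X Y : finType) (muX : X -> R) (muY : Y -> R)
  (K : X -> Y -> R) : Y -> X -> R :=
  fun y x => muX x * K x y / muY y.

Definition wgram (X Y : finType) (muX : X -> R) (muY : Y -> R)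
  (K : X -> Y -> R) : Y -> Y -> R :=
  fun y y' => \sum_(x : X) wadj muX muY K y x * K x y'.

Definition sing_vals (X Y : finType) (muX : X -> R) (muY : Y -> R)
  (K : X -> Y -> R) : seq R :=
  map Num.sqrt (eigs_desc (kmx (wgram muX muY K))).

Definition unif (T : finType) : T -> R := fun _ => 1 / #|T|%:R.

Definition sigma2 (X Y : finType) (K : X -> Y -> R) : R :=
  nth 0 (sing_vals (@unif X) (@unif Y) K) 1.

End SingularValues.

(*   vertices of G : 'I_n ;  edge labels of G : 'I_d1                        *)
(*   vertices of H : [d1]^s = {ffun 'I_s -> 'I_d1} ; labels of H : 'I_d2    *)
(*   rot : rotation map of G ; nbr u a : the neighbour of u along edge a    *)

Notation Hvert d1 s := {ffun 'I_s -> 'I_d1}.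
Notation Vtx n d1 s := ('I_n * {ffun 'I_s -> 'I_d1})%type.
Notation Lab d2 := ('I_d2 * 'I_d2)%type.
(* W[k1,k2] : start vertex x_{k1} and the k2-k1 label pairs
   (a_{k1},b_{k1}), ..., (a_{k2-1},b_{k2-1}), in this order *)
Notation Wset n d1 s d2 k1 k2 :=
  ('I_n * {ffun 'I_s -> 'I_d1} * (k2 - k1).-tuple ('I_d2 * 'I_d2))%type.

Section Walks.
Variables (n d1 s d2 : nat).
Variable rot : 'I_n * 'I_d1 -> 'I_n * 'I_d1.
Variable nbr : {ffun 'I_s -> 'I_d1} -> 'I_d2 -> {ffun 'I_s -> 'I_d1}.

Definition Hstep (a : 'I_d2) (x : Vtx n d1 s) : Vtx n d1 s := (x.1, nbr x.2 a).

Definition Rotm (j : nat) (x : Vtx n d1 s) : Vtx n d1 s :=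
  match [pick t : 'I_s | val t == (j %% s)%N] with
  | Some t => let p := rot (x.1, x.2 t) in
              (p.1, [ffun u => if u == t then p.2 else x.2 u])
  | None => x
  end.

Definition wstep (j : nat) (x : Vtx n d1 s) (p : Lab d2) : Vtx n d1 s :=
  Hstep p.2 (Rotm j (Hstep p.1 x)).

Fixpoint walk (j : nat) (x : Vtx n d1 s) (ls : seq (Lab d2)) : Vtx n d1 s :=
  match ls with
  | [::] => x
  | p :: ls' => walk j.+1 (wstep j x p) ls'
  end.

Variable R : rcfType.

(* Kernel of S_{k1,k2,k3} : R^{W[k2+1,k3]} -> R^{W[k1,k2]}:
   (S f)(w) = E[f(omega2) | omega1 = w] for omega uniform on W[k1,k3], i.e.
   S w w' = P[omega1 = w /\ omega2 = w'] / P[omega1 = w]. *)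
Definition Skern (k1 k2 k3 : nat)
  (w : Wset n d1 s d2 k1 k2) (w' : Wset n d1 s d2 k2.+1 k3) : R :=
  let joint := #|[set om : Wset n d1 s d2 k1 k3 |
                    [&& om.1 == w.1, take (k2 - k1)%N om.2 == val w.2,
                        walk k1 om.1 (take (k2 - k1)%N.+1 om.2) == w'.1 &
                        drop (k2 - k1)%N.+1 om.2 == val w'.2]]| in
  let marg := #|[set om : Wset n d1 s d2 k1 k3 |
                    (om.1 == w.1) && (take (k2 - k1)%N om.2 == val w.2)]| in
  joint%:R / marg%:R.

Definition AH (u w : {ffun 'I_s -> 'I_d1}) : R :=
  #|[set a : 'I_d2 | nbr u a == w]|%:R / d2%:R.

Definition IAH (x y : Vtx n d1 s) : R := (x.1 == y.1)%:R * AH x.2 y.2.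

Definition Gperm (j : nat) (x y : Vtx n d1 s) : R := (Rotm j x == y)%:R.

Definition Pker (j : nat) (x y : Vtx n d1 s) : R :=
  \sum_(z : Vtx n d1 s) \sum_(z' : Vtx n d1 s) IAH x z * Gperm j z z' * IAH z' y.

End Walks.

Arguments Skern [n d1 s d2] rot nbr R k1 k2 k3 w w'.

(* Main.v *)
Require Import Defs.
From HB Require Import structures.
From mathcomp Require Import all_boot all_order all_algebra.
From mathcomp Require Import spectral sesquilinear complex.
From mathcomp Require Import ring zify.
From Stdlib Require Import ClassicalEpsilon.
Import Order.TTheory GRing.Theory Num.Theory Num.Def.

Lemma card_sumE (T : finType) (P : pred T) : #|[set x | P x]| = \sum_x (P x : nat).
Proof.
rewrite -sum1dep_card big_mkcond /=; apply: eq_bigr => x _.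
by case: (P x).
Qed.

Lemma big_tupleS (R : Type) (idx : R) (op : Monoid.com_law idx) (T : finType) K
  (F : K.+1.-tuple T -> R) :
  \big[op/idx]_t F t = \big[op/idx]_p \big[op/idx]_(t : K.-tuple T) F [tuple of p :: t].
Proof.
rewrite pair_big /=.
rewrite (reindex (fun pt : T * K.-tuple T => [tuple of pt.1 :: pt.2])) //.
exists (fun t : K.+1.-tuple T => (thead t, [tuple of behead t])).
  by move=> [p t] _ /=; rewrite theadE; congr (_, _); apply: val_inj.
by move=> t _ /=; rewrite -tuple_eta.
Qed.

Lemma sum_pick (T : finType) (u0 : T) (b : nat) :
  \sum_(p : T) ((p == u0) * b)%N = b.
Proof.
by rewrite (bigD1 u0) //= eqxx mul1n big1 ?addn0 // => p /negPf ->.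
Qed.

Lemma card_take (T : finType) K a (u : seq T) : size u = a -> (a <= K)%N ->
  #|[set t : K.-tuple T | take a t == u]| = (#|T| ^ (K - a))%N.
Proof.
elim: K a u => [|K IH] [|a] [|u0 u] //= hs ha.
- by rewrite card_sumE (eq_bigr (fun _ => 1%N)) ?sum1_card ?card_tuple //= => t _; rewrite take0.
- by rewrite card_sumE (eq_bigr (fun _ => 1%N)) ?sum1_card ?card_tuple //= => t _; rewrite take0.
- rewrite card_sumE big_tupleS /=.
  rewrite (eq_bigr (fun p => (p == u0) * #|[set t : K.-tuple T | take a t == u]|)%N).
    by rewrite sum_pick IH //; case: hs.
  move=> p _; rewrite card_sumE big_distrr /=; apply: eq_bigr => t _.
  by rewrite eqseq_cons; case: (p == u0); case: (take a t == u).
Qed.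

Lemma sum_eq_tuple (T : finType) K (v : seq T) : size v = K ->
  (\sum_(t : K.-tuple T) (val t == v))%N = 1%N.
Proof.
move=> hv; have hv' : size v == K by rewrite hv.
rewrite (bigD1 (Tuple hv')) //= eqxx big1 ?addn0 // => t.
by rewrite -val_eqE /= => /negPf ->.
Qed.

Lemma card_mid (T : finType) K a (u v : seq T) (Qp : pred (seq T)) :
  size u = a -> size v = (K - a.+1)%N -> (a < K)%N ->
  #|[set t : K.-tuple T | [&& take a t == u, Qp (take a.+1 t) & drop a.+1 t == v]]|
  = #|[set p | Qp (rcons u p)]|.
Proof.
elim: a K u Qp => [|a IH] [|K] [|u0 u] Qp //= hu hv ha.
- rewrite [LHS]card_sumE big_tupleS card_sumE; apply: eq_bigr => p _ /=.
  rewrite (eq_bigr (fun t : K.-tuple T => (Qp [:: p] * (val t == v))%N)).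
    by rewrite -big_distrr /= sum_eq_tuple ?muln1 // hv subn1.
  by move=> t _; rewrite /= take0 drop0; case: (Qp _); case: (_ == v).
- rewrite [LHS]card_sumE big_tupleS.
  rewrite (eq_bigr (fun p => (p == u0) *
     #|[set t : K.-tuple T | [&& take a t == u, Qp (u0 :: take a.+1 t) & drop a.+1 t == v]]|)%N).
    rewrite sum_pick (IH K u (fun s => Qp (u0 :: s))) //; by case: hu.
  move=> p _; rewrite card_sumE big_distrr /=; apply: eq_bigr => t _.
  rewrite eqseq_cons; case: (eqVneq p u0) => [->|] //=.
  by rewrite mul1n.
Qed.


Local Open Scope ring_scope.

Lemma prod_XsubC_perm (F : idomainType) (l l' : seq F) :
  \prod_(x <- l) ('X - x%:P) = \prod_(x <- l') ('X - x%:P) -> perm_eq l l'.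
Proof.
elim: l l' => [|x l IH] l' /=.
  rewrite big_nil => E; have := congr1 (fun p : {poly F} => size p) E.
  by rewrite /= size_prod_XsubC size_poly1; case: (l').
rewrite big_cons => E.
have xl' : x \in l'.
  by rewrite -root_prod_XsubC -E rootM root_XsubC eqxx.
have P := perm_to_rem xl'.
move: E; rewrite (perm_big _ P) /= big_cons => /mulfI E.
have {}E := E (negbT (polyXsubC_eq0 x)).
by rewrite perm_sym; apply: (perm_trans P); rewrite perm_cons perm_sym IH.
Qed.

Lemma eigs_descE (R : rcfType) m (A : 'M[R]_m) (l : seq R) :
  sorted (fun a b => b <= a) l -> char_poly A = \prod_(x <- l) ('X - x%:P) ->
  eigs_desc A = l.
Proof.
move=> sl cl; rewrite /eigs_desc.
set P := (fun l0 : seq R => _).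
have [] : P (epsilon (inhabits [::]) P) by apply: epsilon_spec; exists l.
move=> s2 c2; apply: (sorted_eq (leT := fun a b => b <= a)) => //.
- by move=> a b c /= h1 h2; apply: le_trans h2 h1.
- by move=> a b /andP[h1 h2]; apply/eqP; rewrite eq_le h1 h2.
- by apply: prod_XsubC_perm; rewrite -c2 -cl.
Qed.

Lemma char_poly_mulX (R : idomainType) (p q : nat) (A : 'M[R]_(p, q)) (B : 'M[R]_(q, p)) :
  'X ^+ q * char_poly (A *m B) = 'X ^+ p * char_poly (B *m A).
Proof.
rewrite /char_poly /char_poly_mx !map_mxM.
set Ap := map_mx polyC A; set Bp := map_mx polyC B.
pose M := block_mx ('X%:M : 'M_p) Ap Bp (1%:M : 'M_q).
have h1 : \det M = \det ('X%:M - Ap *m Bp).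
  have := det_mulmx M (block_mx 1%:M 0 (- Bp) 1%:M).
  rewrite mulmx_block det_lblock !det1 mulr1 !mulmx1 !mulmx0 !mul1mx mulmxN !add0r.
  rewrite subrr det_ublock det1 !mulr1 => <-.
  by [].
have h2 : \det M * 'X ^+ q = 'X ^+ p * \det ('X%:M - Bp *m Ap).
  have := det_mulmx M (block_mx 1%:M (- Ap) 0 ('X%:M)).
  rewrite mulmx_block det_ublock det1 mul1r det_scalar => <-.
  rewrite !mulmx1 !mulmx0 !addr0 mul1mx mulmxN mul_mx_scalar.
  rewrite mul_scalar_mx addNr addrC.
  by rewrite det_lblock det_scalar mulmxN.
rewrite -h2 mulrC; congr (_ * _); by rewrite h1.
Qed.

Lemma char_poly_sqC (R : idomainType) (m : nat) (A B : 'M[R]_m) :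
  char_poly (A *m B) = char_poly (B *m A).
Proof.
apply: (@mulfI _ ('X ^+ m)); first by rewrite expf_neq0 // polyX_eq0.
exact: char_poly_mulX.
Qed.

Section Cplx.
Local Open Scope complex_scope.

Lemma gram_split (R : rcfType) k m (Q : 'M[R]_(k,m)) : exists l : seq R,
  [/\ sorted (fun a b => b <= a) l, all (fun x => 0 <= x) l &
      char_poly (Q^T *m Q) = \prod_(x <- l) ('X - x%:P)].
Proof.
pose f := real_complex R.
have freal x : f x \is Num.real by rewrite complex_real.
pose Qc := map_mx f Q; pose Gc := Qc^T *m Qc.
have eG : map_mx f (Q^T *m Q) = Gc by rewrite map_mxM -map_trmx.
have Qcc : map_mx conjC Qc = Qc.
  by apply/matrixP => i j; rewrite !mxE; apply: conj_Creal.
have Gh : Gc \is hermsymmx.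
  apply/is_hermitianmxP; rewrite expr0 scale1r.
  apply/matrixP => i j; rewrite !mxE rmorph_sum; apply: eq_bigr => l _.
  rewrite !mxE rmorphM mulrC; congr (_ * _); symmetry; exact: conj_Creal.
set U := spectralmx Gc; set d := spectral_diag Gc.
have eGc : Gc = invmx U *m diag_mx d *m U.
  by move/orthomx_spectralP: (hermitian_normalmx Gh).
have dreal := hermitian_spectral_diag_real Gh.
have Uu := spectral_unitarymx Gc; have Uunit := spectral_unit Gc.
have cGc : char_poly Gc = \prod_i ('X - (d 0 i)%:P).
  rewrite eGc -mulmxA char_poly_sqC -mulmxA mulmxV // mulmx1.
  rewrite char_poly_trig ?diag_mx_is_trig //; apply: eq_bigr => i _.
  by rewrite mxE eqxx mulr1n.
pose l0 := [seq complex.Re (d 0 i) | i <- enum 'I_m].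
have cG : char_poly (Q^T *m Q) = \prod_(x <- l0) ('X - x%:P).
  apply: (@map_poly_inj _ _ f).
  rewrite map_char_poly eG cGc map_prod_XsubC big_map big_enum /=.
  apply: eq_bigr => i _; rewrite RRe_real //.
  by move/mxOverP: dreal; apply.
have dge0 i : 0 <= complex.Re (d 0 i).
  have ed : diag_mx d = U *m Gc *m invmx U.
    by rewrite eGc !mulmxA mulmxV // mul1mx -mulmxA mulmxV // mulmx1.
  pose Y := U *m Qc^T.
  have eY : U *m Gc *m invmx U = Y *m (map_mx conjC Y^T).
    rewrite invmx_unitary // /Y trmx_mul map_mxM trmxK Qcc.
    by rewrite /Gc !mulmxA.
  have : 0 <= d 0 i.
    have -> : d 0 i = diag_mx d i i by rewrite mxE eqxx mulr1n.
    rewrite ed eY mxE; apply: sumr_ge0 => j _; rewrite !mxE.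
    exact: mul_conjC_ge0.
  rewrite -(RRe_real (mxOverP dreal 0 i)).
  by rewrite ler0c.
exists (sort (fun a b => b <= a) l0); split.
- by apply: sort_sorted => a b; apply: le_total.
- rewrite (perm_all _ (permEl (perm_sort _ _))).
  by apply/allP => x /mapP [i _ ->].
- by rewrite cG; apply: perm_big; rewrite perm_sym; exact: permEl (perm_sort _ _).
Qed.

End Cplx.

Lemma prod_nseq0 (R : idomainType) r : \prod_(x <- nseq r (0:R)) ('X - x%:P) = 'X ^+ r.
Proof.
elim: r => [|r IH]; first by rewrite big_nil expr0.
by rewrite /= big_cons IH subr0 exprS.
Qed.

Lemma path_nseq0 (R : rcfType) r (y : R) : 0 <= y ->
  path (fun a b => b <= a) y (nseq r 0).
Proof.
elim: r y => [|r IH] y hy //=.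
by rewrite hy IH.
Qed.

Lemma sigma_transfer (R : rcfType) p q k (A : 'M[R]_(p, q)) (B : 'M[R]_(q, p))
  (Q : 'M[R]_(k, q)) : (q <= p)%N -> B *m A = Q^T *m Q ->
  nth 0 (map Num.sqrt (eigs_desc (A *m B))) 1 =
  nth 0 (map Num.sqrt (eigs_desc (B *m A))) 1.
Proof.
move=> hqp eBA.
have [l [sl al cl]] := @gram_split R _ _ Q.
have e2 : eigs_desc (B *m A) = l by apply: eigs_descE => //; rewrite eBA.
set r := (p - q)%N.
have e1 : eigs_desc (A *m B) = l ++ nseq r 0.
  apply: eigs_descE.
    case: l sl al {e2 cl} => [|x l1] sl al.
      by case: r => //= r; apply: path_nseq0.
    rewrite /= cat_path; rewrite /= in sl; rewrite sl /=.
    apply: path_nseq0; move/allP: al; apply.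
    by rewrite mem_last.
  apply: (@mulfI _ ('X ^+ q)); first by rewrite expf_neq0 // polyX_eq0.
  rewrite char_poly_mulX big_cat /= prod_nseq0 eBA cl.
  have hX : 'X^p = 'X^q * 'X^r :> {poly R} by rewrite -exprD subnKC.
  by rewrite hX -!mulrA [_ * 'X^r]mulrC.
rewrite e1 e2 map_cat nth_cat size_map.
case: ltnP => // h; rewrite [RHS]nth_default ?size_map //.
elim: (r) (1 - size l)%N => [|r' IH] [|j] //=; by rewrite sqrtr0.
Qed.

Local Open Scope ring_scope.

Lemma sum_eq1 (R : pzRingType) (T : finType) (c : T) (F : T -> R) :
  \sum_z (c == z)%:R * F z = F c.
Proof.
rewrite (bigD1 c) //= eqxx mul1r big1 ?addr0 // => z /negPf.
by rewrite eq_sym => ->; rewrite mul0r.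
Qed.

Lemma cardR (R : pzRingType) (T : finType) (P : pred T) :
  (#|[set x | P x]|%:R : R) = \sum_x (P x)%:R.
Proof. by rewrite card_sumE natr_sum. Qed.

Lemma card_fst (A B : finType) (x0 : A) (P : A -> B -> bool) :
  #|[set om : A * B | (om.1 == x0) && P om.1 om.2]| = #|[set t | P x0 t]|.
Proof.
rewrite !card_sumE -(pair_bigA _ (fun a b => ((a == x0) && P a b : nat))) /=.
rewrite (bigD1 x0) //= [X in (_ + X)%N]big1 ?addn0.
  by apply: eq_bigr => b _; rewrite eqxx.
by move=> a /negPf ha; apply: big1 => b _; rewrite ha.
Qed.

Section Graph.
Variables (n d1 s d2 : nat) (rot : 'I_n * 'I_d1 -> 'I_n * 'I_d1)
  (nbr : {ffun 'I_s -> 'I_d1} -> 'I_d2 -> {ffun 'I_s -> 'I_d1}).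
Hypothesis rot_invol : forall p, rot (rot p) = p.
Hypothesis H_undir : forall u w, #|[set a | nbr u a == w]| = #|[set a | nbr w a == u]|.
Variable R : rcfType.
Local Notation V := (Vtx n d1 s).

Lemma Rotm_invol j : involutive (Rotm (s:=s) rot j).
Proof.
move=> x; rewrite /Rotm; case: pickP => [t _|] //=.
rewrite ffunE eqxx /= -surjective_pairing rot_invol /=.
case: x => [x1 x2] /=; congr (_, _); apply/ffunP => u; rewrite !ffunE.
by case: eqP => [->|].
Qed.

Lemma sum_Rotm j (F : V -> R) : \sum_x F (Rotm rot j x) = \sum_x F x.
Proof. by rewrite [RHS](reindex_inj (inv_inj (Rotm_invol j))). Qed.

Lemma sum_nbr (g : {ffun 'I_s -> 'I_d1} -> R) :
  \sum_(a : 'I_d2) \sum_u g (nbr u a) = d2%:R * \sum_w g w.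
Proof.
transitivity (\sum_w g w * \sum_u (#|[set a | nbr u a == w]|%:R : R)).
  rewrite (eq_bigr (fun a => \sum_u \sum_w (nbr u a == w)%:R * g w)); last first.
    by move=> a _; apply: eq_bigr => u _; rewrite sum_eq1.
  rewrite exchange_big /=; rewrite (eq_bigr (fun u => \sum_w \sum_a (nbr u a == w)%:R * g w)); last first.
    by move=> u _; rewrite exchange_big.
  rewrite exchange_big /=; apply: eq_bigr => w _; rewrite mulr_sumr; apply: eq_bigr => u _.
  by rewrite cardR mulr_sumr; apply: eq_bigr => a _; rewrite mulrC.
rewrite mulr_sumr; apply: eq_bigr => w _; rewrite mulrC; congr (_ * _).
rewrite (eq_bigr (fun u => \sum_a (nbr w a == u)%:R)); last by move=> u _; rewrite H_undir cardR.
rewrite exchange_big /= (eq_bigr (fun _ => 1)); last first.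
  by move=> a _; rewrite (eq_bigr (fun u => (nbr w a == u)%:R * 1)) ?sum_eq1 // => u _; rewrite mulr1.
by rewrite sumr_const card_ord.
Qed.

Lemma sum_Hstep (F : V -> R) : \sum_(a : 'I_d2) \sum_x F (Hstep nbr a x) = d2%:R * \sum_x F x.
Proof.
rewrite (eq_bigr (fun a => \sum_v \sum_u F (v, nbr u a))); last first.
  by move=> a _; rewrite pair_bigA.
have -> : \sum_x F x = \sum_v \sum_u F (v, u) by rewrite pair_bigA; apply: eq_bigr => -[].
rewrite exchange_big /= mulr_sumr; apply: eq_bigr => v _.
exact: (sum_nbr (fun u => F (v, u))).
Qed.

Lemma sum_wstep j (F : V -> R) :
  \sum_(p : Lab d2) \sum_x F (wstep rot nbr j x p) = (d2 * d2)%:R * \sum_x F x.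
Proof.
have -> : \sum_(p : Lab d2) \sum_x F (wstep rot nbr j x p) =
  \sum_a \sum_b \sum_x F (Hstep nbr b (Rotm rot j (Hstep nbr a x))).
  by rewrite (pair_bigA _ (fun a b => \sum_x F (Hstep nbr b (Rotm rot j (Hstep nbr a x))))); apply: eq_bigr => -[].
rewrite (eq_bigr (fun a => \sum_x \sum_b F (Hstep nbr b (Rotm rot j (Hstep nbr a x))))); last first.
  by move=> a _; rewrite exchange_big.
rewrite (sum_Hstep (fun y => \sum_b F (Hstep nbr b (Rotm rot j y)))).
rewrite exchange_big /= (eq_bigr (fun b => \sum_x F (Hstep nbr b x))); last first.
  by move=> b _; rewrite (sum_Rotm j (fun y => F (Hstep nbr b y))).
by rewrite sum_Hstep natrM mulrA.
Qed.

Lemma sum_walk K j (F : V -> R) :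
  \sum_(t : K.-tuple (Lab d2)) \sum_x F (walk rot nbr j x t) = ((d2 * d2) ^ K)%:R * \sum_x F x.
Proof.
elim: K j F => [|K IH] j F.
  rewrite (eq_bigr (fun _ => \sum_x F x)); last by move=> t _; rewrite [t]tuple0.
  by rewrite sumr_const card_tuple !expn0 mul1r.
rewrite big_tupleS /=.
rewrite (eq_bigr (fun p => \sum_(t : K.-tuple (Lab d2)) \sum_x F (walk rot nbr j.+1 (wstep rot nbr j x p) t))) //.
rewrite exchange_big /=.
rewrite (eq_bigr (fun t : K.-tuple (Lab d2) => (d2 * d2)%:R * \sum_x F (walk rot nbr j.+1 x t))); last first.
  by move=> t _; rewrite (sum_wstep j (fun y => F (walk rot nbr j.+1 y t))).
rewrite -mulr_sumr IH expnS natrM.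
by rewrite !natrM !mulrA.
Qed.

Lemma walk_rcons j x (u : seq (Lab d2)) p :
  walk rot nbr j x (rcons u p) = wstep rot nbr (j + size u) (walk rot nbr j x u) p.
Proof.
elim: u j x => [|q u IH] j x /=; first by rewrite addn0.
by rewrite IH addSnnS.
Qed.

Lemma IAH_E (x z : V) :
  IAH nbr R x z = d2%:R^-1 * \sum_(a : 'I_d2) (Hstep nbr a x == z)%:R.
Proof.
rewrite /IAH /AH cardR mulrA mulrC; congr (_ * _); rewrite mulr_sumr.
apply: eq_bigr => a _; case: x z => x1 x2 [z1 z2] /=.
rewrite /Hstep /= xpair_eqE.
by case: (nbr x2 a == z2); case: (x1 == z1); rewrite /= ?mulr1 ?mulr0.
Qed.

Lemma Pker_E j (x y : V) : Pker rot nbr R j x y =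
  d2%:R^-1 * d2%:R^-1 * \sum_(a : 'I_d2) \sum_(b : 'I_d2)
     (Hstep nbr b (Rotm rot j (Hstep nbr a x)) == y)%:R.
Proof.
rewrite /Pker.
rewrite (eq_bigr (fun z => IAH nbr R x z * IAH nbr R (Rotm rot j z) y)); last first.
  move=> z _; rewrite (eq_bigr (fun z' => (Rotm rot j z == z')%:R * (IAH nbr R x z * IAH nbr R z' y))).
    by rewrite sum_eq1.
  by move=> z' _; rewrite /Gperm [_ * (Rotm _ _ _ == _)%:R]mulrC -!mulrA.
rewrite (eq_bigr (fun z => d2%:R^-1 * \sum_(a : 'I_d2) (Hstep nbr a x == z)%:R * IAH nbr R (Rotm rot j z) y)); last first.
  by move=> z _; rewrite IAH_E -mulrA mulr_suml.
rewrite -mulr_sumr exchange_big /= -mulrA; congr (_ * _).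
rewrite (eq_bigr (fun a => IAH nbr R (Rotm rot j (Hstep nbr a x)) y)); last first.
  by move=> a _; rewrite sum_eq1.
rewrite mulr_sumr; apply: eq_bigr => a _; by rewrite IAH_E.
Qed.

Lemma card_wstep j (x y : V) :
  (#|[set p | wstep rot nbr j x p == y]|%:R : R) =
  \sum_(a : 'I_d2) \sum_(b : 'I_d2) (Hstep nbr b (Rotm rot j (Hstep nbr a x)) == y)%:R.
Proof.
rewrite cardR (pair_bigA _ (fun a b => (Hstep nbr b (Rotm rot j (Hstep nbr a x)) == y)%:R)).
by apply: eq_bigr => -[].
Qed.

Lemma Skern_E k1 k2 k3 (h12 : (k1 <= k2)%N) (h23 : (k2 < k3)%N)
  (w : Wset n d1 s d2 k1 k2) (w' : Wset n d1 s d2 k2.+1 k3) :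
  Skern rot nbr R k1 k2 k3 w w' =
  #|[set p | wstep rot nbr k2 (walk rot nbr k1 w.1 w.2) p == w'.1]|%:R /
  ((d2 * d2) ^ (k3 - k2))%:R.
Proof.
rewrite /Skern /=.
rewrite (@card_fst _ _ _ (fun a (t : (k3 - k1).-tuple (Lab d2)) =>
   [&& take (k2 - k1) t == val w.2, walk rot nbr k1 a (take (k2 - k1).+1 t) == w'.1
     & drop (k2 - k1).+1 t == val w'.2])).
rewrite (@card_fst _ _ _ (fun a (t : (k3 - k1).-tuple (Lab d2)) => take (k2 - k1) t == val w.2)).
rewrite card_take ?size_tuple //; last by lia.
rewrite (@card_mid _ _ _ _ _ (fun u => walk rot nbr k1 w.1 u == w'.1)) ?size_tuple //; try lia.
rewrite card_prod card_ord.
have -> : (k3 - k1 - (k2 - k1) = k3 - k2)%N by lia.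
congr (_%:R / _); apply: eq_card => p; rewrite !inE walk_rcons size_tuple.
by have -> : (k1 + (k2 - k1) = k2)%N by lia.
Qed.

End Graph.


Lemma sum_enum (R : pzRingType) (T : finType) (F : T -> R) :
  \sum_(i < #|T|) F (enum_val i) = \sum_z F z.
Proof.
rewrite (reindex (@enum_val T T)) //.
by exists (@enum_rank T) => x _; [apply: enum_valK | apply: enum_rankK].
Qed.

Lemma eq_enum_val (T : finType) (x : T) (j : 'I_#|T|) :
  (x == enum_val j) = (enum_rank x == j).
Proof. by rewrite -(inj_eq (@enum_rank_inj T)) enum_valK. Qed.

Section Main.
Variables (R : rcfType) (n d1 s d2 : nat)
  (rot : 'I_n * 'I_d1 -> 'I_n * 'I_d1)
  (nbr : {ffun 'I_s -> 'I_d1} -> 'I_d2 -> {ffun 'I_s -> 'I_d1}).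
Hypotheses (hn : (0 < n)%N) (hd1 : (0 < d1)%N) (hd2 : (0 < d2)%N).
Hypothesis rot_invol : forall p, rot (rot p) = p.
Hypothesis H_undir : forall u w, #|[set a | nbr u a == w]| = #|[set a | nbr w a == u]|.
Variables (k1 k2 k3 : nat) (h12 : (k1 <= k2)%N) (h23 : (k2 < k3)%N).

Local Notation V := (Vtx n d1 s).
Local Notation X1 := (Wset n d1 s d2 k1 k2).
Local Notation Y2 := (Wset n d1 s d2 k2.+1 k3).
Local Notation P := (Pker rot nbr R k2).
Local Notation S := (Skern rot nbr R k1 k2 k3).

Let N := #|{: V}|.
Let Lc := ((d2 * d2) ^ (k3 - k2.+1))%N.
Let M := ((d2 * d2) ^ (k2 - k1))%N.

Lemma N_gt0 : (0 < N)%N.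
Proof. by rewrite /N card_prod card_ord card_ffun card_ord muln_gt0 hn expn_gt0 hd1. Qed.

Lemma card_W a b : #|{: Wset n d1 s d2 a b}| = (N * (d2 * d2) ^ (b - a))%N.
Proof. rewrite card_prod card_tuple; congr (_ * _ ^ _)%N; by rewrite card_prod !card_ord. Qed.

Lemma Lc_gt0 : (0 < Lc)%N.
Proof. by rewrite /Lc expn_gt0 muln_gt0 hd2. Qed.

Lemma M_gt0 : (0 < M)%N.
Proof. by rewrite /M expn_gt0 muln_gt0 hd2. Qed.

Lemma nz {k : nat} : (0 < k)%N -> (k%:R : R) != 0.
Proof. by rewrite pnatr_eq0 -lt0n. Qed.

Lemma S_P (w : X1) (w' : Y2) :
  S w w' = P (walk rot nbr k1 w.1 w.2) w'.1 / Lc%:R.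
Proof.
rewrite (@Skern_E _ _ _ _ rot nbr R _ _ _ h12 h23) (@Pker_E _ _ _ _ rot nbr R) -(@card_wstep _ _ _ _ rot nbr R).
have -> : (k3 - k2 = (k3 - k2.+1).+1)%N by lia.
rewrite expnS natrM -/Lc.
have h2 := nz hd2; have hL := nz Lc_gt0.
field; by rewrite hL h2.
Qed.

Lemma wgramP_E (y y' : V) :
  wgram (@unif R _) (@unif R _) P y y' = \sum_z P z y * P z y'.
Proof.
rewrite /wgram /wadj /unif; apply: eq_bigr => z _.
have hN := nz N_gt0.
rewrite -/N; field; by rewrite hN.
Qed.

Lemma wgramS_E (y y' : Y2) :
  wgram (@unif R _) (@unif R _) S y y' = Lc%:R^-1 * \sum_x P x y.1 * P x y'.1.
Proof.
rewrite /wgram /wadj /unif !card_W.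
have hN := nz N_gt0; have hL := nz Lc_gt0; have hM := nz M_gt0.
rewrite (eq_bigr (fun w : X1 => (N * (d2 * d2) ^ (k3 - k2.+1))%:R / (N * (d2 * d2) ^ (k2 - k1))%:R / Lc%:R / Lc%:R *
    (P (walk rot nbr k1 w.1 w.2) y.1 * P (walk rot nbr k1 w.1 w.2) y'.1))); last first.
  move=> w _; rewrite !S_P -/Lc; field.
  by rewrite hL -/M hM hN.
rewrite -mulr_sumr.
rewrite -(pair_bigA _ (fun x (t : (k2 - k1).-tuple (Lab d2)) =>
    P (walk rot nbr k1 x t) y.1 * P (walk rot nbr k1 x t) y'.1)) /=.
rewrite exchange_big /=.
rewrite (@sum_walk _ _ _ _ rot nbr rot_invol H_undir R _ _ (fun z => P z y.1 * P z y'.1)).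
rewrite -/M -/Lc !natrM -/N; field.
by rewrite hL hN hM.
Qed.

Definition Amx : 'M[R]_(#|{: Y2}|, #|{: V}|) :=
  \matrix_(i, j) ((enum_val i).1 == enum_val j)%:R.
Definition Qmx : 'M[R]_#|{: V}| := kmx P.
Definition Gmx : 'M[R]_#|{: V}| := kmx (wgram (@unif R _) (@unif R _) P).
Definition Bmx := Lc%:R^-1 *: (Gmx *m Amx^T).

Lemma Gmx_gram : Gmx = Qmx^T *m Qmx.
Proof.
apply/matrixP => j k; rewrite !mxE wgramP_E -sum_enum; apply: eq_bigr => l _.
by rewrite !mxE.
Qed.

Lemma AtA : Amx^T *m Amx = Lc%:R%:M.
Proof.
apply/matrixP => j k; rewrite !mxE.
rewrite (eq_bigr (fun i => ((enum_val i).1 == enum_val j)%:R * ((enum_val i).1 == enum_val k)%:R)); last first.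
  by move=> i _; rewrite !mxE.
rewrite (@sum_enum _ _ (fun y : Y2 => (y.1 == enum_val j)%:R * (y.1 == enum_val k)%:R)).
rewrite -(pair_bigA _ (fun (x : V) (t : (k3 - k2.+1).-tuple (Lab d2)) =>
   (x == enum_val j)%:R * (x == enum_val k)%:R)) /=.
rewrite (eq_bigr (fun x : V => (enum_val j == x)%:R * ((x == enum_val k)%:R * Lc%:R))); last first.
  move=> x _; rewrite sumr_const card_tuple card_prod card_ord -/Lc.
  by rewrite -mulrnAr -[_ *+ Lc]mulr_natr eq_sym.
rewrite (@sum_eq1 _ _ _ (fun i => (i == enum_val k)%:R * Lc%:R)) (inj_eq enum_val_inj).
by case: (j == k); rewrite ?mul1r ?mul0r.
Qed.

Lemma BA : Bmx *m Amx = Gmx.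
Proof.
rewrite /Bmx -scalemxAl -mulmxA AtA mul_mx_scalar scalerA mulVf ?scale1r //.
exact: nz Lc_gt0.
Qed.

Lemma AB : kmx (wgram (@unif R _) (@unif R _) S) = Amx *m Bmx.
Proof.
apply/matrixP => i i'; rewrite !mxE wgramS_E.
rewrite (eq_bigr (fun j => (enum_rank (enum_val i).1 == j)%:R *
     (Lc%:R^-1 * \sum_k Gmx j k * ((enum_rank (enum_val i').1 == k)%:R)))); last first.
  move=> j _; rewrite !mxE eq_enum_val; congr (_ * _); congr (_ * _).
  by apply: eq_bigr => k _; rewrite !mxE eq_enum_val.
rewrite sum_eq1; congr (_ * _).
rewrite (eq_bigr (fun k => (enum_rank (enum_val i').1 == k)%:R * Gmx (enum_rank (enum_val i).1) k)); last first.
  by move=> k _; rewrite mulrC.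
by rewrite sum_eq1 /Gmx mxE !enum_rankK wgramP_E.
Qed.

Lemma final : sigma2 S = sigma2 P.
Proof.
rewrite /sigma2 /sing_vals AB -/Gmx -BA.
apply: (@sigma_transfer R _ _ _ _ _ Qmx); last by rewrite BA Gmx_gram.
rewrite card_W -/N; rewrite leq_pmulr //; exact: Lc_gt0.
Qed.

End Main.

Theorem mainTheorem6
  (R : rcfType) (n d1 s d2 : nat)
  (rot : 'I_n * 'I_d1 -> 'I_n * 'I_d1)
  (nbr : {ffun 'I_s -> 'I_d1} -> 'I_d2 -> {ffun 'I_s -> 'I_d1})
  (hn : (0 < n)%N) (hd1 : (0 < d1)%N) (hd2 : (0 < d2)%N) (hs : (0 < s)%N)
  (* rot is a rotation map of an undirected d1-regular graph on [n] *)
  (rot_invol : forall p, rot (rot p) = p)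
  (* ... which is locally invertible *)
  (rot_loc : exists2 phi : 'I_d1 -> 'I_d1, bijective phi &
               forall v a, (rot (v, a)).2 = phi a)
  (* H is an undirected d2-regular graph with edge labeling nbr *)
  (H_undir : forall u w, #|[set a | nbr u a == w]| = #|[set a | nbr w a == u]|)
  (k1 k2 k3 : nat) (h12 : (k1 <= k2)%N) (h23 : (k2 < k3)%N) :
  sigma2 (Skern rot nbr R k1 k2 k3) = sigma2 (Pker rot nbr R k2).
Proof.
exact: (@final R n d1 s d2 rot nbr hn hd1 hd2 rot_invol H_undir k1 k2 k3 h12 h23).
Qed.
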